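(* Let $p$ and $q$ be positive integers with $q\ge 2$ and $\gcd(p,q)=1$, and let $\xi_j=e^{2\pi i j/q}$. Then $$\sum_{j=1}^{q-1}\frac{\xi_j}{(\xi_j-1)^2(\xi_j^p-1)}=\frac{q^2-1}{24}.$$ *)

(* Defs.v *)
From mathcomp Require Import all_boot all_algebra.
From mathcomp Require Import complex.
From mathcomp Require Import all_classical all_reals all_analysis.
Import GRing.Theory Num.Theory.
Local Open Scope ring_scope.
Local Open Scope complex_scope.

Definition xi {R : realType} (q j : nat) : R[i] :=
  (cos (2 * pi * j%:R / q%:R)) +i* (sin (2 * pi * j%:R / q%:R)).

(* Main.v *)
Require Import Defs.
From mathcomp Require Import all_boot all_algebra.
From mathcomp Require Import complex.
From mathcomp Require Import all_classical all_reals all_analysis.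
From mathcomp Require Import ring lra.
Import GRing.Theory Num.Theory.
Local Open Scope ring_scope.
Local Open Scope complex_scope.

Lemma cmul (R : rcfType) (a b c d : R) : (a +i* b) * (c +i* d) = (a * c - b * d) +i* (a * d + b * c).
Proof. by []. Qed.

Lemma xiS (R : realType) q j : xi q j.+1 = xi q j * xi q 1 :> R[i].
Proof.
rewrite /xi cmul.
have -> : 2 * pi * j.+1%:R / q%:R = 2 * pi * j%:R / q%:R + 2 * pi * 1%:R / q%:R :> R.
  by rewrite -mulrDl -mulrDr natr1.
by rewrite cosD sinD; congr (_ +i* _); rewrite addrC.
Qed.

Lemma xiX (R : realType) q j : xi q j = xi q 1 ^+ j :> R[i].
Proof.
elim: j => [|j IH]; last by rewrite xiS IH exprSr.
by rewrite /xi mulr0 mul0r cos0 sin0.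
Qed.

Lemma xiq (R : realType) q : (0 < q)%N -> xi q q = 1 :> R[i].
Proof.
move=> q0; rewrite /xi.
have -> : 2 * pi * q%:R / q%:R = pi *+ 2 :> R.
  by rewrite mulfK ?pnatr_eq0 -?lt0n // -[in RHS]mulr_natr mulrC.
by rewrite cos2pi sin2pi.
Qed.

Lemma xi_neq1 (R : realType) q r : (0 < r < q)%N -> xi q r != 1 :> R[i].
Proof.
case/andP => r0 rq.
have q0 : (0 < q)%N by apply: leq_trans rq.
apply/eqP => /(congr1 (@complex.Re R)) /= H.
set h : R := pi * r%:R / q%:R.
have hpos : 0 < h < pi.
  have q0' : (0:R) < q%:R by rewrite ltr0n.
  apply/andP; split.
    by rewrite /h divr_gt0 // mulr_gt0 ?pi_gt0 // ltr0n.
  rewrite /h ltr_pdivrMr // ltr_pM2l ?pi_gt0 // ltr_nat //.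
have : cos (h *+ 2) = 1.
  rewrite -H /h; congr cos; rewrite mulr2n. ring.
rewrite cos_mulr2n => E.
have : sin h ^+ 2 = 0 by rewrite sin2cos2; lra.
move/eqP; rewrite expf_eq0 /= => /eqP Hs.
by move: (sin_gt0_pi hpos); rewrite Hs; lra.
Qed.

Lemma abel (F : comRingType) (a : nat -> F) (x : F) n :
  (x - 1) * \sum_(0 <= k < n) a k * x ^+ k =
  a n * x ^+ n - a 0%N - \sum_(0 <= k < n) (a k.+1 - a k) * x ^+ k.+1.
Proof.
elim: n => [|n IH]; first by rewrite !big_geq // mulr0 expr0 mulr1 subrr sub0r oppr0.
rewrite !big_nat_recr //= mulrDr IH exprS; ring.
Qed.

Lemma geo0 (F : fieldType) (x : F) q : x ^+ q = 1 -> x != 1 ->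
  \sum_(0 <= k < q) x ^+ k = 0.
Proof.
move=> xq x1.
have := abel _ (fun _ : nat => 1 : F) x q.
have -> : \sum_(0 <= k < q) ((1:F) - 1) * x ^+ k.+1 = 0.
  by rewrite big1 // => k _; rewrite subrr mul0r.
under eq_bigr do rewrite mul1r.
rewrite subr0 !mul1r xq subrr => /eqP.
by rewrite mulf_eq0 subr_eq0 (negbTE x1) /= => /eqP.
Qed.

Lemma key (F : numFieldType) (x : F) q : (0 < q)%N -> x ^+ q = 1 -> x != 1 ->
  x / (x - 1) ^+ 2 =
  (2 * q%:R)^-1 * \sum_(0 <= k < q) (k%:R * (q%:R - k%:R)) * x ^+ k.
Proof.
move=> q0 xq x1.
set c := fun k : nat => (k%:R * (q%:R - k%:R) : F).
set d := fun k : nat => (q%:R - 2 * k%:R - 1 : F).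
have x10 : x - 1 != 0 by rewrite subr_eq0.
have q0' : (q%:R : F) != 0 by rewrite pnatr_eq0 -lt0n.
have g0 := geo0 _ _ _ xq x1.
have h1 := abel _ c x q.
have h2 := abel _ d x q.
have e1 : \sum_(0 <= k < q) (c k.+1 - c k) * x ^+ k.+1 = x * \sum_(0 <= k < q) d k * x ^+ k.
  rewrite big_distrr /=; apply: eq_bigr => k _.
  rewrite /c /d exprS -natr1; ring.
have e2 : \sum_(0 <= k < q) (d k.+1 - d k) * x ^+ k.+1 = -2 * x * \sum_(0 <= k < q) x ^+ k.
  rewrite big_distrr /=; apply: eq_bigr => k _.
  rewrite /d exprS -natr1; ring.
rewrite e2 g0 mulr0 subr0 xq mulr1 in h2.
have cq : c q = 0 by rewrite /c subrr mulr0.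
have c0 : c 0%N = 0 by rewrite /c mul0r.
rewrite e1 xq mulr1 cq c0 subrr sub0r in h1.
have H : (x - 1) ^+ 2 * \sum_(0 <= k < q) c k * x ^+ k = 2 * q%:R * x.
  by rewrite expr2 -mulrA h1 mulrN mulrCA h2 /d; ring.
have -> : \sum_(0 <= k < q) k%:R * (q%:R - k%:R) * x ^+ k = 2 * q%:R * x / (x - 1) ^+ 2.
  by rewrite -H mulrC mulKf // expf_neq0.
by field; rewrite x10 q0'.
Qed.

Lemma sumc (F : numFieldType) q n :
  6 * \sum_(0 <= k < n) (k%:R * (q%:R - k%:R) : F) =
  3 * q%:R * n%:R * (n%:R - 1) - (n%:R - 1) * n%:R * (2 * n%:R - 1).
Proof.
elim: n => [|n IH]; first by rewrite big_geq //; ring.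
rewrite big_nat_recr //= mulrDr IH -natr1; ring.
Qed.

Lemma sym (F : fieldType) (w y : F) : w != 0 -> w != 1 -> y != 0 -> y != 1 ->
  w / ((w - 1) ^+ 2 * (y - 1)) + w^-1 / ((w^-1 - 1) ^+ 2 * (y^-1 - 1))
  = - (w / (w - 1) ^+ 2).
Proof.
move=> w0 w1 y0 y1.
have w1' : w - 1 != 0 by rewrite subr_eq0.
have y1' : y - 1 != 0 by rewrite subr_eq0.
have w2 : w^-1 - 1 != 0 by rewrite subr_eq0 invr_eq1.
have y2 : y^-1 - 1 != 0 by rewrite subr_eq0 invr_eq1.
by field; rewrite !mulN1r !subr_eq0 ![1 == _]eq_sym w0 w1 y0 y1.
Qed.

Theorem mainTheorem8 (R : realType) (p q : nat) :
  (0 < p)%N -> (2 <= q)%N -> coprime p q ->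
  \sum_(1 <= j < q)
     (xi q j / ((xi q j - 1) ^+ 2 * ((xi q j) ^+ p - 1)) : R[i])
  = ((q ^ 2 - 1)%:R / 24%:R : R[i]).
Proof.
move=> p0 q2 cpq.
have q0 : (0 < q)%N by apply: leq_trans q2.
set z : R[i] := xi q 1.
have zq : z ^+ q = 1 by rewrite /z -xiX xiq.
have zne : forall m, ~~ (q %| m)%N -> z ^+ m != 1.
  move=> m nd; rewrite (divn_eq m q) exprD mulnC exprM zq expr1n mul1r /z -xiX.
  apply: xi_neq1; rewrite ltn_pmod // andbT lt0n; exact: nd.
have z0 : forall m, z ^+ m != 0.
  move=> m; rewrite expf_neq0 //; apply/eqP => h; move: zq.
  by rewrite h expr0n eqn0Ngt q0 /= => /eqP; rewrite eq_sym oner_eq0.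
have jnd : forall j, (0 < j < q)%N -> ~~ (q %| j)%N.
  move=> j /andP[j0 jq]; apply/negP => /(dvdn_leq j0); rewrite leqNgt jq.
  by [].
have jpnd : forall j, (0 < j < q)%N -> ~~ (q %| j * p)%N.
  by move=> j hj; rewrite Gauss_dvdl 1?coprime_sym // jnd.
under eq_bigr do rewrite xiX -/z.
set f := fun w : R[i] => w / ((w - 1) ^+ 2 * (w ^+ p - 1)).
change (\sum_(1 <= j < q) f (z ^+ j) = (q ^ 2 - 1)%:R / 24%:R).
set S := \sum_(1 <= j < q) f (z ^+ j).
have Sr : S = \sum_(1 <= j < q) f ((z ^+ j)^-1).
  rewrite /S big_nat_rev /= big_nat_cond [RHS]big_nat_cond.
  apply: eq_bigr => j /andP[/andP[j1 jq] _]; congr f.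
  apply: (mulIf (z0 j)); rewrite mulVf // -exprD.
  by rewrite add1n subSS subnK ?zq // ltnW.
have S2 : S + S = - \sum_(1 <= j < q) (z ^+ j / (z ^+ j - 1) ^+ 2).
  rewrite {2}Sr -big_split -sumrN big_nat_cond [RHS]big_nat_cond.
  apply: eq_bigr => j /andP[hj _]; rewrite /f exprVn.
  apply: sym; rewrite ?z0 ?zne ?jnd // -exprM; [exact: z0 | exact: zne (jpnd _ hj)].
set c := fun k : nat => (k%:R * (q%:R - k%:R) : R[i]).
have T : \sum_(1 <= j < q) (z ^+ j / (z ^+ j - 1) ^+ 2) =
    (2 * q%:R)^-1 * - \sum_(0 <= k < q) c k.
  rewrite big_nat_cond.
  under eq_bigr => j /andP[hj _].
    rewrite (key _ _ _ q0 _ (zne _ (jnd _ hj))); last by rewrite exprAC zq expr1n.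
  over.
  rewrite -big_distrr /= -big_nat_cond exchange_big /= -sumrN; congr (_ * _).
  rewrite big_nat_cond [RHS]big_nat_cond; apply: eq_bigr => k /andP[/andP[_ kq] _].
  under eq_bigr do rewrite exprAC.
  rewrite -big_distrr /=.
  case: k kq => [|k] kq; first by rewrite /c mul0r mul0r oppr0.
  have zk1 : (z ^+ k.+1) ^+ q = 1 by rewrite exprAC zq expr1n.
  have := geo0 _ _ _ zk1 (zne _ (jnd k.+1 _)).
  move=> /(_ kq) H; rewrite big_ltn // expr0 in H.
  move/eqP: H; rewrite addrC addr_eq0 => /eqP ->.
  by rewrite mulrN1.
have q0' : (q%:R : R[i]) != 0 by rewrite pnatr_eq0 -lt0n.
have hc := sumc (R[i]) q q.
have Sv : S = (q%:R ^+ 2 - 1) / 24.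
  have Sc : \sum_(0 <= k < q) c k =
      (3 * q%:R * q%:R * (q%:R - 1) - (q%:R - 1) * q%:R * (2 * q%:R - 1)) / 6.
    by rewrite -hc; field.
  rewrite T Sc in S2.
  have -> : S = (S + S) / 2 by field.
  by rewrite S2; field.
rewrite Sv natrB ?natrX //; last by rewrite expn_gt0 q0.
Qed.
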